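(* Let $X$ be a set, $U\subset 2^X$ a non-empty family of subsets and $\mu:U\to B_2$ a function. (a) If $U$ is closed under $\Delta$ and $\cap$, then the following are equivalent: (a.1) for all $A,B\in U$, $A\cap B=\emptyset$ implies $\mu(A\cup B)=\mu(A)\oplus\mu(B)$; (a.2) for all $A,B\in U$, $\mu(A\Delta B)=\mu(A)\oplus\mu(B)$. (b) If $U$ is closed under $\Theta$ and $\cup$, then the following are equivalent: (b.1) for all $A,B\in U$, $A\cup B=X$ implies $\mu(A\cap B)=\mu(A)\otimes\mu(B)$; (b.2) for all $A,B\in U$, $\mu(A\Theta B)=\mu(A)\otimes\mu(B)$.
   Context: $B_2=\{0,1\}$. On $B_2$, $\oplus$ is addition modulo 2 ($x\oplus y=1$ iff $x\neq y$) and $\otimes$ is the coincidence ($x\otimes y=1$ iff $x=y$). For subsets of $X$, $\Delta$ is the symmetric difference and $A\Theta B=X-(A\Delta B)$. *)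

(* Defs.v *)
From mathcomp Require Import all_boot.
From mathcomp Require Import boolp classical_sets.
Set Implicit Arguments. Unset Strict Implicit. Unset Printing Implicit Defensive.
Local Open Scope classical_set_scope.

Definition symdiff (X : Type) (A B : set X) : set X := (A `\` B) `|` (B `\` A).
Definition theta (X : Type) (A B : set X) : set X := setT `\` symdiff A B.

(* B_2 = {0,1} as bool (false = 0, true = 1). *)
Definition b2plus (x y : bool) : bool := x != y.
Definition b2coin (x y : bool) : bool := x == y.

(* Main.v *)
Require Import Defs.
From mathcomp Require Import all_boot.
From mathcomp Require Import boolp classical_sets.
From Stdlib Require Classical_Prop.
Local Open Scope classical_set_scope.

Ltac seteq A B := apply/funext => x; apply/propext;
  rewrite /theta /symdiff /setU /setI /setD /setC /setT /set0 /=;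
  have := Classical_Prop.classic (A x); have := Classical_Prop.classic (B x); tauto.

Lemma pt (X : Type) (A B : set X) x : A = B -> A x -> B x.
Proof. by move=> ->. Qed.

Theorem theorem2p1 (X : Type) (U : set (set X)) (mu : set X -> bool) :
  U !=set0 ->
  ((forall A B, U A -> U B -> U (symdiff A B)) ->
   (forall A B, U A -> U B -> U (A `&` B)) ->
   ((forall A B, U A -> U B -> A `&` B = set0 ->
       mu (A `|` B) = b2plus (mu A) (mu B)) <->
    (forall A B, U A -> U B -> mu (symdiff A B) = b2plus (mu A) (mu B))))
  /\
  ((forall A B, U A -> U B -> U (theta A B)) ->
   (forall A B, U A -> U B -> U (A `|` B)) ->
   ((forall A B, U A -> U B -> A `|` B = setT ->
       mu (A `&` B) = b2coin (mu A) (mu B)) <->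
    (forall A B, U A -> U B -> mu (theta A B) = b2coin (mu A) (mu B)))).
Proof.
move=> [A0 UA0]; split.
- move=> HD HI; split.
  + move=> H A B UA UB.
    have UAB := HI _ _ UA UB.
    have U1 := HD _ _ UA UAB.
    have U2 := HD _ _ UB (HI _ _ UB UA).
    have e1 : symdiff A B = symdiff A (A `&` B) `|` symdiff B (B `&` A) by seteq A B.
    have e2 : A = symdiff A (A `&` B) `|` (A `&` B) by seteq A B.
    have e3 : B = symdiff B (B `&` A) `|` (A `&` B) by seteq A B.
    have d1 : symdiff A (A `&` B) `&` symdiff B (B `&` A) = set0 by seteq A B.
    have d2 : symdiff A (A `&` B) `&` (A `&` B) = set0 by seteq A B.
    have d3 : symdiff B (B `&` A) `&` (A `&` B) = set0 by seteq A B.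
    rewrite e1 (H _ _ U1 U2 d1).
    have m2 : mu A = b2plus (mu (symdiff A (A `&` B))) (mu (A `&` B)) by rewrite -(H _ _ U1 UAB d2) -e2.
    have m3 : mu B = b2plus (mu (symdiff B (B `&` A))) (mu (A `&` B)) by rewrite -(H _ _ U2 UAB d3) -e3.
    rewrite m2 m3 /b2plus.
    by case: (mu (symdiff A _)); case: (mu (symdiff B _)); case: (mu (A `&` B)).
  + move=> H A B UA UB d.
    have -> : A `|` B = symdiff A B.
      apply/funext => x; apply/propext.
      have hx : ~ (A x /\ B x) by move=> h; exact (pt _ _ _ _ d h).
      move: hx; rewrite /symdiff /setU /setD /=.
      have := Classical_Prop.classic (A x); have := Classical_Prop.classic (B x); tauto.
    exact: H.
- move=> HT HU; split.
  + move=> H A B UA UB.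
    have UAB := HU _ _ UA UB.
    have U1 := HT _ _ UA UAB.
    have U2 := HT _ _ UB (HU _ _ UB UA).
    have e1 : theta A B = theta A (A `|` B) `&` theta B (B `|` A) by seteq A B.
    have e2 : A = theta A (A `|` B) `&` (A `|` B) by seteq A B.
    have e3 : B = theta B (B `|` A) `&` (A `|` B) by seteq A B.
    have d1 : theta A (A `|` B) `|` theta B (B `|` A) = setT by seteq A B.
    have d2 : theta A (A `|` B) `|` (A `|` B) = setT by seteq A B.
    have d3 : theta B (B `|` A) `|` (A `|` B) = setT by seteq A B.
    rewrite e1 (H _ _ U1 U2 d1).
    have m2 : mu A = b2coin (mu (theta A (A `|` B))) (mu (A `|` B)) by rewrite -(H _ _ U1 UAB d2) -e2.
    have m3 : mu B = b2coin (mu (theta B (B `|` A))) (mu (A `|` B)) by rewrite -(H _ _ U2 UAB d3) -e3.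
    rewrite m2 m3 /b2coin.
    by case: (mu (theta A _)); case: (mu (theta B _)); case: (mu (A `|` B)).
  + move=> H A B UA UB d.
    have -> : A `&` B = theta A B.
      apply/funext => x; apply/propext.
      have hx : A x \/ B x by exact (pt _ _ _ _ (esym d) I).
      move: hx; rewrite /theta /symdiff /setU /setI /setD /setT /=.
      have := Classical_Prop.classic (A x); have := Classical_Prop.classic (B x); tauto.
    exact: H.
Qed.
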